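(* Let $m,r$ be integers with $m>1$, $r>2$. Every numerical semigroup $S\in\mathcal{MA}(m,r)$ has exactly $\left\lfloor\frac{\mathrm{F}(S)-\mathrm{M}(S)}{m}\right\rfloor+1$ children in the graph $G(\mathcal{MA}(m,r))$.
   Context: $\mathbb{N}=\{0,1,2,\ldots\}$. A numerical semigroup is a subset $S\subseteq\mathbb{N}$ closed under addition, containing $0$, with finite complement; $\mathrm{msg}(S)=\{n_1<\cdots<n_e\}$ is its unique finite minimal system of generators, $\mathrm{m}(S)=n_1$, $\mathrm{r}(S)=n_2$, $\mathrm{M}(S)=n_e$; $\mathrm{F}(S)$ is the largest integer not in $S$. $S$ is a MANS-semigroup if $w(1)<\cdots<w(\mathrm{m}(S)-1)$, where $w(i)$ is the least element of $S$ congruent to $i$ modulo $\mathrm{m}(S)$. $\mathcal{MA}(m,r)$ is the set of MANS-semigroups $S$ with $\mathrm{m}(S)=m$ and $\mathrm{r}(S)=r$. $G(\mathcal{MA}(m,r))$ is the directed graph with vertex set $\mathcal{MA}(m,r)$ in which $(T,S)$ is an edge iff $\mathrm{msg}(S)=\mathrm{msg}(T)\setminus\{\mathrm{M}(T)\}$; in that case $T$ is a child of $S$. *)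

(* Defs.v *)
From mathcomp Require Import all_boot all_order all_algebra.
Set Implicit Arguments. Unset Strict Implicit. Unset Printing Implicit Defensive.

Definition numsg (S : pred nat) : Prop :=
  S 0 /\ (forall a b, S a -> S b -> S (a + b)) /\ (exists N, forall n, N <= n -> S n).

Definition is_msg (S : pred nat) (x : nat) : Prop :=
  S x /\ 0 < x /\ ~ (exists a b, 0 < a /\ 0 < b /\ S a /\ S b /\ a + b = x).

Definition is_mult (S : pred nat) (m : nat) : Prop :=
  is_msg S m /\ (forall x, is_msg S x -> m <= x).

Definition is_r (S : pred nat) (r : nat) : Prop :=
  is_msg S r /\ (exists m, is_mult S m /\ m < r) /\
  (forall x, is_msg S x -> x < r -> is_mult S x).

Definition is_M (S : pred nat) (M : nat) : Prop :=
  is_msg S M /\ (forall x, is_msg S x -> x <= M).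

(* f = F(S): the Frobenius number, largest integer not in S (here f : nat,
   used only when S <> N). *)
Definition is_F (S : pred nat) (f : nat) : Prop :=
  ~~ S f /\ (forall n, f < n -> S n).

Definition is_w (S : pred nat) (m i w : nat) : Prop :=
  S w /\ w = i %[mod m] /\ (forall n, S n -> n = i %[mod m] -> w <= n).

Definition MANS (S : pred nat) : Prop :=
  forall m, is_mult S m ->
  forall i j wi wj, 0 < i -> i < j -> j < m ->
    is_w S m i wi -> is_w S m j wj -> wi < wj.

Definition in_MA (m r : nat) (S : pred nat) : Prop :=
  numsg S /\ is_mult S m /\ is_r S r /\ MANS S.

(* T is a child of S in G(MA(m,r)): (T,S) is an edge, i.e. T \in MA(m,r)
   and msg(S) = msg(T) \ {M(T)}. *)
Definition child (m r : nat) (S T : pred nat) : Prop :=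
  in_MA m r T /\
  exists MT, is_M T MT /\ (forall x, is_msg S x <-> (is_msg T x /\ x <> MT)).

(* S has exactly k children in G(MA(m,r)), counting semigroups up to
   extensional equality of their membership predicates. *)
Definition has_exactly_children (m r : nat) (S : pred nat) (k : nat) : Prop :=
  exists f : 'I_k -> pred nat,
    (forall i, child m r S (f i)) /\
    (forall i j, (forall n, f i n = f j n) -> i = j) /\
    (forall T, child m r S T -> exists i, forall n, T n = f i n).

(* Main.v *)
Require Import Defs.
From mathcomp Require Import all_boot all_order all_algebra.
From mathcomp Require Import zify.
From Stdlib Require Import Classical.
Import GRing.Theory.

Lemma int_part1 (F M m : nat) : 0 < m -> M < F ->
  (((F - M) %/ m + 1)%N%:Z = intdiv.divz (F%:Z - M%:Z) m%:Z + 1)%R.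
Proof.
move=> m0 lt; rewrite subzn ?(ltnW lt) // intdiv.divz_nat PoszD //.
Qed.

Lemma int_part2 (F M m : nat) : 0 < m -> F < M -> M <= F + m ->
  ((0%N)%:Z = intdiv.divz (F%:Z - M%:Z) m%:Z + 1)%R.
Proof.
move=> m0 lt le.
have -> : (F%:Z - M%:Z = Negz (M - F - 1))%R.
  rewrite NegzE.
  have -> : (M - F - 1).+1 = M - F by lia.
  rewrite -subzn ?(ltnW lt) //. by rewrite opprB.
rewrite intdiv.divNz_nat // divn_small; last by lia.
by [].
Qed.
Set Implicit Arguments. Unset Strict Implicit. Unset Printing Implicit Defensive.

Lemma sg_mul (S : pred nat) a q : numsg S -> S a -> S (q * a).
Proof.
move=> [S0 [Sadd _]] Sa; elim: q => [|q IH]; first by rewrite mul0n.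
by rewrite mulSn; apply: Sadd.
Qed.

Lemma sg_shift (S : pred nat) a m q : numsg S -> S a -> S m -> S (a + q * m).
Proof. move=> hS Sa Sm; have [_ [Sadd _]] := hS; apply: Sadd => //; exact: sg_mul. Qed.

Lemma sg_modle (S : pred nat) a b m : numsg S -> S a -> S m -> a <= b ->
  b %% m = a %% m -> S b.
Proof.
move=> hS Sa Sm ab hmod.
have : m %| b - a by rewrite -eqn_mod_dvd // hmod.
case/dvdnP=> q hq.
have -> : b = a + q * m by lia.
exact: sg_shift.
Qed.

Lemma decomp (S : pred nat) n : S n -> 0 < n -> ~ is_msg S n ->
  exists a b, 0 < a /\ 0 < b /\ S a /\ S b /\ a + b = n.
Proof.
move=> Sn n0 nm; apply: NNPP => H; apply: nm; split => //; split => //.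
Qed.

Lemma mult_min (S : pred nat) m s : is_mult S m -> S s -> 0 < s -> m <= s.
Proof.
move=> [_ hmin]; elim: s {-2}s (leqnn s) => [|n IH] s hs Ss s0.
  by move: s0; rewrite (_ : s = 0) //; lia.
case: (classic (is_msg S s)) => [/hmin //|nm].
have [a [b [a0 [b0 [Sa [Sb ab]]]]]] := decomp Ss s0 nm.
have : m <= a by apply: IH => //; lia.
lia.
Qed.

Lemma mult_uniq (S : pred nat) m m' : is_mult S m -> is_mult S m' -> m = m'.
Proof.
move=> h1 h2; have := h1.2 _ h2.1; have := h2.2 _ h1.1; lia.
Qed.

Lemma msg_le_M (S : pred nat) M x : is_M S M -> is_msg S x -> x <= M.
Proof. by move=> [_ h] /h. Qed.

Lemma w_exists (S : pred nat) m i : numsg S -> 0 < m -> i < m ->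
  exists w, is_w S m i w.
Proof.
move=> [S0 [Sadd [N HN]]] m0 im.
have ex : exists n, S n && (n %% m == i).
  exists (N * m + i); rewrite HN; last by nia.
  by rewrite modnMDl modn_small // eqxx.
case: (ex_minnP ex) => w /andP [Sw /eqP wm] hmin.
exists w; split => //; split; first by rewrite wm modn_small.
move=> n Sn nm; apply: hmin; rewrite Sn /= nm modn_small //.
Qed.

Definition GP (S : pred nat) m := forall z, ~~ S z -> z.+1 %% m != 0 -> ~~ S z.+1.

Lemma mod0_in (S : pred nat) m z : numsg S -> S m -> z %% m = 0 -> S z.
Proof.
move=> hS Sm hz; rewrite (divn_eq z m) hz addn0; exact: sg_mul.
Qed.

Lemma mans_gp (S : pred nat) m : numsg S -> is_mult S m -> MANS S -> GP S m.
Proof.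
move=> hS hm hM z nz hz1; apply/negP => Sz1.
have m0 : 0 < m by case: hm => [[_ [h _]] _].
have Sm : S m by case: hm => [[h _] _].
set j := z %% m.
have j0 : j != 0.
  apply/negP => /eqP j0; move/negP: nz; apply; exact: mod0_in j0.
have jm : j < m by rewrite ltn_pmod.
have hz1e : z.+1 %% m = j.+1 %% m.
  by rewrite {1}(divn_eq z m) -addnS modnMDl.
have j1m : j.+1 < m.
  case: (ltngtP j.+1 m) => // [|hj]; first by lia.
  by move: hz1; rewrite hz1e hj modnn eqxx.
have hz1' : z.+1 %% m = j.+1 by rewrite hz1e modn_small.
have [wj hwj] := w_exists hS m0 jm.
have [wj1 hwj1] := w_exists hS m0 j1m.
have j0' : 0 < j by rewrite lt0n.
have lt := hM m hm j j.+1 wj wj1 j0' (ltnSn j) j1m hwj hwj1.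
case: hwj => Swj [wjm wjmin].
case: hwj1 => Swj1 [wj1m wj1min].
have h1 : wj1 <= z.+1.
  by apply: wj1min.
have h2 : z < wj.
  rewrite ltnNge; apply/negP => le; move/negP: nz; apply.
  apply: (sg_modle hS Swj Sm le); by rewrite wjm /j modn_mod.
lia.
Qed.

Lemma gp_iter (S : pred nat) m y d : GP S m -> ~~ S y -> S (y + d) ->
  exists2 t, t < d & (y + t).+1 %% m == 0.
Proof.
move=> hG ny; elim: d => [|d IH] Sd; first by move: Sd; rewrite addn0 (negbTE ny).
case: (boolP (S (y + d))) => [/IH [t td ht]|nd]; first by exists t => //; lia.
exists d => //.
apply/negPn/negP => hd; move: (hG _ nd hd); rewrite -addnS Sd //.
Qed.

Lemma gp_mans (S : pred nat) m : is_mult S m -> GP S m -> MANS S.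
Proof.
move=> hm hG m' hm'; rewrite -(mult_uniq hm hm') => i j wi wj i0 ij jm [Swi [wim wimin]] [Swj [wjm wjmin]].
have jle : j <= wj.
  by rewrite -(modn_small jm) -wjm leq_mod.
rewrite ltnNge; apply/negP => le.
have ne : wi != wj.
  apply/negP => /eqP e; move: wim; rewrite e wjm (modn_small jm) modn_small; last by apply: ltn_trans jm.
  lia.
have lt : wj < wi by rewrite ltn_neqAle eq_sym ne le.
have e : wj = (wj %/ m) * m + j by rewrite {1}(divn_eq wj m) wjm modn_small.
move: e; generalize (wj %/ m) => q e.
set z := wj - (j - i).
have ze : z = q * m + i.
  rewrite /z e; move: (q * m) => Q; clear -ij; lia.
have zmod : z %% m = i.
  by rewrite ze modnMDl modn_small //; apply: ltn_trans jm.
have nz : ~~ S z.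
  apply/negP => Sz; have := wimin z Sz.
  rewrite zmod (modn_small (ltn_trans ij jm)) => /(_ erefl) hle.
  have : z <= wj by rewrite /z leq_subr.
  move: hle lt; clear; lia.
have Sz : S (z + (j - i)).
  by rewrite /z subnK //; apply: leq_trans jle; exact: leq_subr.
have [t tl ht] := gp_iter hG nz Sz.
move: ht; have -> : (z + t).+1 = q * m + (i + t).+1.
  rewrite ze; move: (q * m) => Q; clear; lia.
rewrite modnMDl modn_small //; last by move: tl jm; clear; lia.
Qed.

Definition Tx (S : pred nat) (x : nat) : pred nat :=
  fun n => [exists k : 'I_n.+1, (k * x <= n) && S (n - k * x)].

Lemma TxP (S : pred nat) x n : 0 < x ->
  Tx S x n <-> exists k, k * x <= n /\ S (n - k * x).
Proof.
move=> x0; split.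
  by case/existsP => k /andP [h1 h2]; exists k.
move=> [k [h1 h2]]; apply/existsP.
have kn : k < n.+1 by rewrite ltnS; apply: leq_trans h1; rewrite leq_pmulr.
by exists (Ordinal kn); rewrite /= h1 h2.
Qed.

Lemma Tx_sub (S : pred nat) x n : 0 < x -> S n -> Tx S x n.
Proof. by move=> x0 Sn; apply/TxP => //; exists 0; rewrite mul0n subn0. Qed.

Lemma Tx_lt (S : pred nat) x n : 0 < x -> n < x -> Tx S x n -> S n.
Proof.
move=> x0 nx /TxP [] // [|k] [h1 h2]; first by rewrite mul0n subn0 in h2.
move: h1; rewrite mulSn => h1; move: nx h1; move: (k * x) => K; lia.
Qed.

Lemma Tx_mul (S : pred nat) x q : numsg S -> 0 < x -> Tx S x (q * x).
Proof.
move=> [S0 _] x0; apply/TxP => //; exists q; by rewrite leqnn subnn.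
Qed.

Lemma Tx_add (S : pred nat) x a b : numsg S -> 0 < x -> Tx S x a -> Tx S x b ->
  Tx S x (a + b).
Proof.
move=> [S0 [Sadd _]] x0 /TxP [] // k1 [h1 h2] /TxP [] // k2 [h3 h4].
apply/TxP => //; exists (k1 + k2); rewrite mulnDl; split.
  by rewrite leq_add.
have -> : a + b - (k1 * x + k2 * x) = (a - k1 * x) + (b - k2 * x).
  move: h1 h3; move: (k1 * x) (k2 * x) => K1 K2; lia.
exact: Sadd.
Qed.

Lemma Tx_numsg (S : pred nat) x : numsg S -> 0 < x -> numsg (Tx S x).
Proof.
move=> hS x0; have [S0 [Sadd [N HN]]] := hS; split; first exact: Tx_sub.
split; first by move=> a b; exact: Tx_add.
by exists N => n /HN; exact: Tx_sub.
Qed.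

Lemma Tx_x (S : pred nat) x : numsg S -> 0 < x -> Tx S x x.
Proof. by move=> hS x0; have := Tx_mul 1 hS x0; rewrite mul1n. Qed.

Section TxMsg.
Variables (S : pred nat) (M x : nat).
Hypotheses (hS : numsg S) (hM : is_M S M) (Mx : M < x) (nSx : ~~ S x).

Lemma x0 : 0 < x. Proof. by apply: leq_ltn_trans Mx. Qed.

Lemma msgTx y : is_msg (Tx S x) y <-> is_msg S y \/ y = x.
Proof.
have [S0 [Sadd _]] := hS.
split.
  move=> [Ty [y0 nd]].
  have [k [h1 h2]] := (TxP _ _ x0).1 Ty.
  case: k h1 h2 => [|k] h1 h2.
    rewrite mul0n subn0 in h2; left; split => //; split => //.
    move=> [a [b [a0 [b0 [Sa [Sb ab]]]]]]; apply: nd.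
    exists a, b; do 2!split => //; split; [exact: Tx_sub x0 Sa | split; [exact: Tx_sub x0 Sb | done]].
  case: (posnP (y - k.+1 * x)) => s0.
    case: k h1 h2 s0 => [|k] h1 h2 s0; first by right; move: h1 s0; rewrite mul1n; lia.
    exfalso; apply: nd; exists x, (k.+1 * x); split; first exact: x0.
    split; first by rewrite muln_gt0 x0.
    split; first exact: Tx_x hS x0.
    split; first exact: Tx_mul hS x0.
    move: h1 s0; rewrite mulSn; move: (k.+1 * x) => K; lia.
  exfalso; apply: nd; exists (y - k.+1 * x), (k.+1 * x); split => //.
  split; first by rewrite muln_gt0 x0.
  split; first exact: Tx_sub x0 h2.
  split; first exact: Tx_mul hS x0.
  by rewrite subnK.
have [Mmsg Mmax] := hM.
move=> hy.
have hsmall : forall a b, 0 < a -> 0 < b -> a + b <= x -> Tx S x a -> Tx S x b -> S a /\ S b.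
  move=> a b a0 b0 ab Ta Tb; split; apply: Tx_lt Ta || apply: Tx_lt Tb; rewrite ?x0 //; lia.
case: hy => [[Sy [y0 nd]]|->].
  have yM := Mmax _ (conj Sy (conj y0 nd)).
  split; first exact: Tx_sub x0 Sy.
  split => // [[a [b [a0 [b0 [Ta [Tb ab]]]]]]]; apply: nd.
  have [Sa Sb] := hsmall a b a0 b0 (ltnW (leq_ltn_trans (eq_leq ab) (leq_ltn_trans yM Mx))) Ta Tb.
  by exists a, b.
split; first exact: Tx_x hS x0.
split; first exact: x0.
move=> [a [b [a0 [b0 [Ta [Tb ab]]]]]].
have [Sa Sb] := hsmall a b a0 b0 (eq_leq ab) Ta Tb.
by move: nSx; rewrite -ab Sadd.
Qed.
End TxMsg.

Section TxChild.
Variables (m r : nat) (S : pred nat) (M x : nat).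
Hypotheses (hMA : in_MA m r S) (hM : is_M S M) (Mx : M < x) (nSx : ~~ S x)
  (Sx1 : S x.-1).

Let hS : numsg S := hMA.1.
Let hm : is_mult S m := hMA.2.1.
Let hr : is_r S r := hMA.2.2.1.
Let hmans : MANS S := hMA.2.2.2.
Let x0 : 0 < x := x0 Mx.

Lemma mult_Tx : is_mult (Tx S x) m.
Proof.
split; first by apply/(msgTx hS hM Mx nSx); left; exact: hm.1.
move=> z /(msgTx hS hM Mx nSx) [hz|->]; first exact: hm.2.
apply: ltnW; apply: leq_ltn_trans Mx; exact: hM.2 _ hm.1.
Qed.

Lemma r_Tx : is_r (Tx S x) r.
Proof.
have [rmsg [[m' [hm' m'r]] rmin]] := hr.
have rM : r <= M := hM.2 _ rmsg.
split; first by apply/(msgTx hS hM Mx nSx); left.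
split; first by exists m; split; [exact: mult_Tx | rewrite (mult_uniq hm hm')].
move=> z /(msgTx hS hM Mx nSx) [hz|->] zr.
  by rewrite -(mult_uniq hm (rmin z hz zr)); exact: mult_Tx.
exfalso; move: zr rM Mx; clear; lia.
Qed.

Lemma gp_Tx : GP (Tx S x) m.
Proof.
have hG := mans_gp hS hm hmans.
have [S0 [Sadd _]] := hS.
move=> z nz hz; apply/negP => Tz1.
have nSz : ~~ S z by apply/negP => Sz; move/negP: nz; apply; exact: Tx_sub x0 Sz.
have [k [h1 h2]] := (TxP _ _ x0).1 Tz1.
case: k h1 h2 => [|k] h1 h2.
  by rewrite mul0n subn0 in h2; move/negP: (hG z nSz hz).
move/negP: nz; apply; apply/TxP => //; exists k.
rewrite mulSn in h1 h2 *.
have e : z - k * x = (z.+1 - (x + k * x)) + x.-1.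
  move: h1 x0; move: (k * x) => K; clear; lia.
split; first by move: h1 x0; move: (k * x) => K; clear; lia.
rewrite e; exact: Sadd.
Qed.

Lemma MA_Tx : in_MA m r (Tx S x).
Proof.
split; first exact: Tx_numsg.
split; first exact: mult_Tx.
split; first exact: r_Tx.
exact: gp_mans mult_Tx gp_Tx.
Qed.

Lemma child_Tx : child m r S (Tx S x).
Proof.
split; first exact: MA_Tx.
exists x; split.
  split; first by apply/(msgTx hS hM Mx nSx); right.
  move=> z /(msgTx hS hM Mx nSx) [hz|->] //.
  apply: ltnW; apply: leq_ltn_trans Mx; exact: hM.2.
move=> y; split.
  move=> hy; split; first by apply/(msgTx hS hM Mx nSx); left.
  move=> e; move: (hM.2 _ hy); rewrite e; move: Mx; clear; lia.
by move=> [/(msgTx hS hM Mx nSx) [] // ].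
Qed.
End TxChild.

Lemma strong_ind (P : nat -> Prop) : (forall n, (forall k, k < n -> P k) -> P n) -> forall n, P n.
Proof.
move=> H n; elim: n {-2}n (leqnn n) => [|n IH] k hk; apply: H => j hj.
  by move: hk hj; clear; lia.
apply: IH; move: hk hj; clear; lia.
Qed.

Lemma child_inv (m r : nat) (S T : pred nat) (M : nat) :
  in_MA m r S -> is_M S M -> child m r S T ->
  exists x, [/\ M < x, ~~ S x, S x.-1 & forall n, T n = Tx S x n].
Proof.
move=> hMA hM [hT [x [hMT heq]]].
have hS := hMA.1; have hTs := hT.1.
have [S0 [Sadd _]] := hS; have [T0 [Tadd _]] := hTs.
have ST : forall n, S n -> T n.
  apply: strong_ind => n IH Sn.
  case: (posnP n) => [->//|n0].
  case: (classic (is_msg S n)) => [/(heq n).1 [[]] //|nm].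
  have [a [b [a0 [b0 [Sa [Sb ab]]]]]] := decomp Sn n0 nm.
  rewrite -ab; apply: Tadd; apply: IH => //; rewrite -ab; move: a0 b0; clear; lia.
have Mx : M < x.
  have [hMT1 hMT2] := (heq M).1 hM.1.
  have := hMT.2 _ hMT1; move: hMT2; clear; lia.
have x0 : 0 < x by apply: leq_ltn_trans Mx.
have nSx : ~~ S x.
  apply/negP => Sx.
  have nm : ~ is_msg S x by move/(heq x) => [_].
  have [a [b [a0 [b0 [Sa [Sb ab]]]]]] := decomp Sx x0 nm.
  have [_ [_ nd]] := hMT.1; apply: nd; exists a, b; do 2!split => //.
  by split; [exact: ST|split; [exact: ST|]].
have TTx : forall n, T n -> Tx S x n.
  apply: strong_ind => n IH Tn.
  case: (posnP n) => [->|n0]; first exact: Tx_sub.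
  case: (classic (is_msg T n)) => [hn|nm].
    case: (eqVneq n x) => [->|nx]; first exact: Tx_x.
    have hSn : is_msg S n by apply/(heq n); split => //; exact/eqP.
    exact: Tx_sub x0 hSn.1.
  have [a [b [a0 [b0 [Ta [Tb ab]]]]]] := decomp Tn n0 nm.
  rewrite -ab; apply: Tx_add => //; apply: IH => //; rewrite -ab; move: a0 b0; clear; lia.
have TxT : forall n, Tx S x n -> T n.
  move=> n /(TxP _ _ x0) [k [h1 h2]].
  rewrite -(subnK h1); apply: Tadd; first exact: ST.
  apply: sg_mul => //; exact: hMT.1.1.
have eqT : forall n, T n = Tx S x n.
  by move=> n; apply/idP/idP; [exact: TTx | exact: TxT].
exists x; split => //.
have hm := hMA.2.1; have Sm := hm.1.1; have m0 := hm.1.2.1.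
have hmT : is_mult T m := hT.2.1.
have hG := mans_gp hTs hmT hT.2.2.2.
apply/negPn/negP => nx1.
have nTx1 : ~~ T x.-1.
  apply/negP => /TTx /(Tx_lt x0) h; move/negP: nx1; apply; apply: h.
  by move: x0; clear; lia.
have xm : x.-1.+1 %% m != 0.
  apply/negP => /eqP h; move/negP: nSx; apply; apply: (mod0_in hS Sm).
  by rewrite -h prednK.
have := hG _ nTx1 xm; rewrite prednK // => /negP; apply; exact: hMT.1.1.
Qed.

Lemma lemQ (S : pred nat) m M y : numsg S -> GP S m -> S m -> 0 < m -> S M ->
  M < y -> y %% m <= M %% m -> S y.
Proof.
move=> hS hG Sm m0 SM My hle; apply/negPn/negP => ny.
have ey := divn_eq y m; have eM := divn_eq M m.
have i0m : M %% m < m by rewrite ltn_pmod.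
move: ey eM hle i0m; move: (y %/ m) (y %% m) (M %/ m) (M %% m) => c l c' i0 ey eM hle i0m.
have SM' : S (y + (i0 - l)).
  apply: (sg_modle hS SM Sm).
    rewrite ey eM; move: My; rewrite ey eM => My.
    rewrite (_ : c * m + l + (i0 - l) = c * m + i0); last by move: hle; clear; lia.
    move: My hle; clear; move: (c * m) (c' * m) => A B; lia.
  rewrite ey eM (_ : c * m + l + (i0 - l) = c * m + i0); last by move: hle; clear; lia.
  by rewrite !modnMDl.
have [s sl hs] := gp_iter hG ny SM'.
move: hs; rewrite ey (_ : (c * m + l + s).+1 = c * m + (l + s).+1); last by clear; lia.
rewrite modnMDl modn_small; last by move: sl hle i0m; clear; lia.
by [].
Qed.

Lemma window_key (S : pred nat) m M t x y : numsg S -> GP S m -> S m -> 0 < m -> S M ->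
  M + 1 + t * m <= y -> y < x -> x < M + 1 + t * m + m ->
  ~~ S y -> S x.-1 -> ~~ S x -> False.
Proof.
move=> hS hG Sm m0 SM h1 h2 h3 ny Sx1 nx.
have Syd : S (y + (x.-1 - y)) by rewrite subnKC //; move: h2; clear; lia.
have [s sl hs] := gp_iter hG ny Syd.
move/eqP: hs => hs.
have ep := divn_eq (y + s).+1 m; rewrite hs addn0 in ep.
move/negP: nx; apply; apply: (lemQ hS hG Sm m0 SM); first by move: h1 h2; clear; lia.
have e1 : x = (y + s).+1 %/ m * m + (x - (y + s).+1) by rewrite -ep; move: sl; clear; lia.
have e2 : M + t.+1 * m = (y + s).+1 %/ m * m + (M + t.+1 * m - (y + s).+1).
  by rewrite -ep mulSn; move: sl h1 h2 h3; clear; move: (t * m) => T; lia.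
have -> : M %% m = (M + t.+1 * m) %% m by rewrite addnC modnMDl.
rewrite {1}e1 e2 !modnMDl !modn_small.
- by rewrite mulSn; move: sl h1 h2 h3; clear; move: (t * m) => T; lia.
- by rewrite mulSn; move: sl h1 h2 h3; clear; move: (t * m) => T; lia.
- by move: sl h1 h2 h3; clear; move: (t * m) => T; lia.
Qed.

Lemma Tx_inj (S : pred nat) x y : numsg S -> 0 < x -> 0 < y -> ~~ S x -> ~~ S y ->
  (forall n, Tx S x n = Tx S y n) -> x = y.
Proof.
move=> hS x0 y0 nx ny e.
case: (ltngtP x y) => // h.
  have : Tx S y x by rewrite -e; exact: Tx_x.
  by move/(Tx_lt y0 h); rewrite (negbTE nx).
have : Tx S x y by rewrite e; exact: Tx_x.
by move/(Tx_lt x0 h); rewrite (negbTE ny).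
Qed.

Lemma window_uniq (M m i j x : nat) : 0 < m ->
  M + 1 + i * m <= x -> x < M + 1 + i * m + m ->
  M + 1 + j * m <= x -> x < M + 1 + j * m + m -> i = j.
Proof.
move=> m0 h1 h2 h3 h4.
have a : i < j.+1 by rewrite -(ltn_pmul2r m0) mulSn; move: h1 h4; clear; move: (i * m) (j * m) => I J; lia.
have b : j < i.+1 by rewrite -(ltn_pmul2r m0) mulSn; move: h3 h2; clear; move: (i * m) (j * m) => I J; lia.
by move: a b; clear; lia.
Qed.

Theorem proposition4p15 (m r : nat) (S : pred nat) (F M : nat) :
  1 < m -> 2 < r -> in_MA m r S -> is_F S F -> is_M S M ->
  exists k : nat,
    (k%:Z = intdiv.divz (F%:Z - M%:Z) m%:Z + 1)%R /\ has_exactly_children m r S k.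
Proof.
move=> m1 r2 hMA hF hM.
have hS := hMA.1; have hm := hMA.2.1; have hr := hMA.2.2.1; have hmans := hMA.2.2.2.
have Sm := hm.1.1; have m0 : 0 < m := hm.1.2.1.
have hG := mans_gp hS hm hmans.
have SM := hM.1.1.
have mr : m < r.
  have [_ [[m' [hm' m'r]] _]] := hr; by rewrite (mult_uniq hm hm').
have rM : r <= M := hM.2 _ hr.1.
have MF : M <= F + m.
  have nS : ~~ S (M - m).
    apply/negP => hMm; have [_ [_ nd]] := hM.1; apply: nd.
    exists (M - m), m; split; first by move: mr rM; clear; lia.
    split => //; split => //; split => //; move: mr rM; clear; lia.
  case: (leqP (M - m) F) => h; first by move: h; clear; lia.
  by move: nS; rewrite hF.2.
have FM : F != M by apply/eqP => e; move: hF.1; rewrite e SM.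
case: (ltngtP F M) => [FltM|MltF|e]; last by move: FM; rewrite e eqxx.
  exists 0; split; first exact: int_part2.
  exists (fun _ => S); split; first by case.
  split; first by case.
  move=> T hT; have [x [Mx nSx _ _]] := child_inv hMA hM hT.
  by move: nSx; rewrite hF.2 //; apply: ltn_trans Mx.
set q := (F - M) %/ m; set rho := (F - M) %% m.
have eFM : F = M + q * m + rho by rewrite /q /rho -addnA -divn_eq subnKC // ltnW.
have rhom : rho < m by rewrite /rho ltn_pmod.
have rho0 : 0 < rho.
  rewrite lt0n; apply/negP => /eqP r0; move: hF.1; rewrite eFM r0 addn0.
  by rewrite (sg_shift _ hS SM Sm).
move: eFM rhom rho0; move: rho => rho eFM rhom rho0; clearbody q.
exists (q + 1); split.
  have -> : q = (F - M) %/ m by rewrite eFM -addnA addKn divnMDl // divn_small // addn0.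
  exact: int_part1.
have ex : forall t, t < q + 1 -> exists n, (M + 1 + t * m <= n) && ~~ S n.
  move=> t tq; exists F; rewrite hF.1 andbT eFM.
  have : t * m <= q * m by rewrite leq_pmul2r //; move: tq; clear; lia.
  move: rho0; clear; move: (t * m) (q * m) => A B; lia.
have key : forall t (H : t < q + 1), let x := ex_minn (ex t H) in
    [/\ M < x, ~~ S x, S x.-1, M + 1 + t * m <= x < M + 1 + t * m + m
      & forall n, M + 1 + t * m <= n -> ~~ S n -> x <= n].
  move=> t H; case: ex_minnP => x /andP [h1 h2] hmin.
  have hmin' : forall n, M + 1 + t * m <= n -> ~~ S n -> x <= n.
    by move=> n hn1 hn2; apply: hmin; rewrite hn1 hn2.
  have tq : t <= q by move: H; clear; lia.
  have xlt : x < M + 1 + t * m + m.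
    have nz : ~~ S (M + t * m + rho).
      apply/negP => Sz; move: hF.1.
      have -> : F = M + t * m + rho + (q - t) * m.
        rewrite eFM mulnBl; have : t * m <= q * m by rewrite leq_pmul2r.
        clear; move: (t * m) (q * m) => A B; lia.
      by rewrite (sg_shift _ hS Sz Sm).
    have hle : M + 1 + t * m <= M + t * m + rho.
      by move: rho0; clear; move: (t * m) => A; lia.
    have := hmin' _ hle nz.
    move: rhom rho0; clear; move: (t * m) => A; lia.
  split => //.
  - by move: h1; clear; move: (t * m) => A; lia.
  - case: (eqVneq x (M + 1 + t * m)) => [->|nx].
      rewrite (_ : (M + 1 + t * m).-1 = M + t * m); last by clear; move: (t * m) => A; lia.
      exact: sg_shift.
    apply/negPn/negP => nx1.
    have hle : M + 1 + t * m <= x.-1.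
      by move: h1 nx; clear; move: (t * m) => A; lia.
    have := hmin' _ hle nx1.
    by move: h1 nx; clear; move: (t * m) => A; lia.
  - by rewrite h1.
pose xt (i : 'I_(q + 1)) := ex_minn (ex i (ltn_ord i)).
exists (fun i => Tx S (xt i)); split.
  move=> i; have [Mx nSx Sx1 _ _] := key i (ltn_ord i).
  exact: child_Tx hMA hM Mx nSx Sx1.
split.
  move=> i j e.
  have [Mx nSx _ /andP [hi1 hi2] _] := key i (ltn_ord i).
  have [My nSy _ /andP [hj1 hj2] _] := key j (ltn_ord j).
  have exy := Tx_inj hS (x0 Mx) (x0 My) nSx nSy e.
  apply: val_inj => /=; apply: (window_uniq m0 hi1 hi2); rewrite /xt exy //.
move=> T hT; have [x [Mx nSx Sx1 eT]] := child_inv hMA hM hT.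
set t := (x - M - 1) %/ m.
have ex1 := divn_eq (x - M - 1) m.
have rm : (x - M - 1) %% m < m by rewrite ltn_pmod.
have xF : x <= F.
  by case: (leqP x F) => // h; move: nSx; rewrite hF.2.
have tq : t < q + 1.
  rewrite addn1 ltnS /t; apply: leq_trans (leq_div2r m (_ : x - M - 1 <= F - M)) _.
    by move: xF; clear; lia.
  by rewrite eFM -addnA addKn divnMDl // divn_small // addn0.
have w1 : M + 1 + t * m <= x.
  move: ex1 Mx; rewrite -/t; clear; move: (t * m) ((x - M - 1) %% m) => A B; lia.
have w2 : x < M + 1 + t * m + m.
  move: ex1 Mx rm; rewrite -/t; clear; move: (t * m) ((x - M - 1) %% m) => A B; lia.
exists (Ordinal tq) => n; rewrite eT.
have [Mx' nSx' _ /andP [h1 h2] hmin] := key (Ordinal tq) (ltn_ord (Ordinal tq)).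
have -> : x = xt (Ordinal tq); last by [].
apply/eqP; rewrite eqn_leq; apply/andP; split; last exact: hmin.
rewrite leqNgt; apply/negP => lt.
exact: (window_key hS hG Sm m0 SM h1 lt w2 nSx' Sx1 nSx).
Qed.
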